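(* Let $m\ge 2$ and $\beta=0$. A real number $\lambda$ is a principal eigenvalue of $\Delta_0$ (with homogeneous Dirichlet boundary condition) if and only if $\lambda\in(0,1]$. Moreover, for every $\lambda\in(0,1]$ the function $u(x)=(1-\lambda)^{|x|}$ (with the convention $0^0=1$) is an eigenfunction associated with $\lambda$.
   Context: Tree: for an integer $m\ge2$, the regular $m$-branching tree $\mathbb{T}_m$ has as vertices the root $\emptyset$ and all finite sequences $(\emptyset,a_1,\dots,a_k)$, $k\in\mathbb{N}$, $a_i\in\{0,\dots,m-1\}$. The level of $x=(\emptyset,a_1,\dots,a_k)$ is $|x|=k$ ($|\emptyset|=0$). The successors of $x$ are $(x,i)$, $i\in\{0,\dots,m-1\}$; for $x\ne\emptyset$, $\hat x$ denotes its unique immediate predecessor. A branch is an infinite sequence $(x_n)_{n\ge0}$ with $x_0=\emptyset$ and $x_{n+1}$ a successor of $x_n$; $\partial\mathbb{T}_m$ is the set of branches. For $y=(x_n)\in\partial\mathbb{T}_m$, $\lim_{x\to y}u(x)=L$ means $\lim_{n\to\infty}u(x_n)=L$ (similarly for $\liminf$, $\limsup$). Operator: for $\beta\in[0,1)$ let $p_\beta=1$ if $\beta=0$ and $p_\beta=\beta/(1-\beta)$ if $\beta\in(0,1)$. For $u:\mathbb{T}_m\to\mathbb{R}$, $\Delta_\beta u(\emptyset)=\frac1m\sum_{i=0}^{m-1}u(\emptyset,i)-u(\emptyset)$ and, for $x\ne\emptyset$, $\Delta_\beta u(x)=\big(\beta u(\hat x)+\frac{1-\beta}{m}\sum_{i=0}^{m-1}u(x,i)-u(x)\big)p_\beta^{-|x|}$.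 Eigenvalues: $\lambda\in\mathbb{R}$ is an eigenvalue of $\Delta_\beta$ if there is a bounded $u:\mathbb{T}_m\to\mathbb{R}$, $u\not\equiv0$, with $-\Delta_\beta u=\lambda u$ on $\mathbb{T}_m$ and $\lim_{x\to y}u(x)=0$ for every $y\in\partial\mathbb{T}_m$ ($u$ is an eigenfunction). An eigenvalue $\lambda>0$ is principal if it has a non-negative eigenfunction. *)

(* Defs.v *)
From HB Require Import structures.
From mathcomp Require Import all_boot all_order all_algebra.
From mathcomp Require Import all_classical all_reals all_analysis.
Set Implicit Arguments. Unset Strict Implicit. Unset Printing Implicit Defensive.
Import Order.TTheory GRing.Theory Num.Theory.
Import numFieldNormedType.Exports.
Local Open Scope classical_set_scope.
Local Open Scope ring_scope.

(* Vertices of the regular m-branching tree T_m: finite sequences over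
   {0,..,m-1}; the root is [::], the successors of x are rcons x i,
   and the level |x| is size x. *)
Definition vertex (m : nat) := seq 'I_m.

(* immediate predecessor (meaningful for x <> [::]) *)
Definition parent (m : nat) (x : vertex m) : vertex m := take (size x).-1 x.

Definition is_branch (m : nat) (b : nat -> vertex m) : Prop :=
  b 0%N = [::] /\ forall n, exists i : 'I_m, b n.+1 = rcons (b n) i.

Definition p_beta (R : realType) (beta : R) : R :=
  if beta == 0 then 1 else beta / (1 - beta).

Definition Delta (R : realType) (m : nat) (beta : R) (u : vertex m -> R)
  (x : vertex m) : R :=
  if x is [::] then m%:R^-1 * (\sum_(i < m) u (rcons x i)) - u x
  else (beta * u (parent x) + (1 - beta) / m%:R * (\sum_(i < m) u (rcons x i))
        - u x) / (p_beta beta ^+ size x).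

Definition bounded_fun (m : nat) (R : realType) (u : vertex m -> R) : Prop :=
  exists M : R, forall x, `|u x| <= M.

Definition eigenfunction (R : realType) (m : nat) (beta lam : R)
  (u : vertex m -> R) : Prop :=
  [/\ bounded_fun u,
      exists x, u x != 0,
      forall x, - @Delta R m beta u x = lam * u x
    & forall b, is_branch b -> (fun n => u (b n)) @ \oo --> (0 : R)].

Definition eigenvalue (R : realType) (m : nat) (beta lam : R) : Prop :=
  exists u : vertex m -> R, @eigenfunction R m beta lam u.

Definition principal_eigenvalue (R : realType) (m : nat) (beta lam : R) : Prop :=
  0 < lam /\ exists u : vertex m -> R, @eigenfunction R m beta lam u /\ forall x, 0 <= u x.

Arguments eigenfunction {R} m beta lam u.
Arguments eigenvalue {R} m beta lam.
Arguments principal_eigenvalue {R} m beta lam.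

(* Main.v *)
Require Import Defs.
From HB Require Import structures.
From mathcomp Require Import all_boot all_order all_algebra.
From mathcomp Require Import all_classical all_reals all_analysis.
Import Order.TTheory GRing.Theory Num.Theory.
Local Open Scope ring_scope.

Lemma Delta0 (R : realType) (m : nat) (u : vertex m -> R) x :
  Delta 0 u x = m%:R^-1 * (\sum_(i < m) u (rcons x i)) - u x.
Proof.
case: x => [|a x] //=.
rewrite /p_beta eqxx expr1n divr1 mul0r add0r subr0 div1r.
by [].
Qed.

Lemma branch_size m (b : nat -> vertex m) : is_branch b -> forall n, size (b n) = n.
Proof.
move=> [h0 hS]; elim=> [|n IH]; first by rewrite h0.
by have [i ->] := hS n; rewrite size_rcons IH.
Qed.

Theorem theorem1p1 (R : realType) (m : nat) (hm : (2 <= m)%N) :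
  (forall lam : R, principal_eigenvalue m 0 lam <-> (0 < lam /\ lam <= 1)) /\
  (forall lam : R, 0 < lam -> lam <= 1 ->
     eigenfunction m 0 lam (fun x : vertex m => (1 - lam) ^+ size x)).
Proof.
have mpos : (0 : R) < m%:R by rewrite ltr0n; case: m hm.
have mne : (m%:R : R) != 0 by rewrite gt_eqF.
have ef : forall lam : R, 0 < lam -> lam <= 1 ->
     eigenfunction m 0 lam (fun x : vertex m => (1 - lam) ^+ size x).
  move=> lam l0 l1.
  have h0 : 0 <= 1 - lam by rewrite subr_ge0.
  have h1 : 1 - lam < 1 by rewrite ltrBlDr ltrDl.
  split.
  - exists 1 => x; rewrite ger0_norm ?exprn_ge0 //.
    by rewrite exprn_ile1 // ltW.
  - by exists [::]; rewrite /= expr0 oner_eq0.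
  - move=> x; rewrite Delta0.
    under eq_bigr => i _ do rewrite size_rcons exprS.
    rewrite sumr_const card_ord -[((1 - lam) * _) *+ m]mulr_natl mulKf //.
    rewrite opprB -{1}(mul1r ((1 - lam) ^+ size x)) -mulrBl.
    by rewrite opprD addrA subrr add0r opprK.
  - move=> b hb.
    have -> : (fun n => (1 - lam) ^+ size (b n)) = (fun n => (1 - lam) ^+ n).
      by apply: funext => n; rewrite branch_size.
    by apply: cvg_expr; rewrite ger0_norm.
split=> // lam; split; last first.
  move=> [l0 l1]; split=> //; exists (fun x : vertex m => (1 - lam) ^+ size x).
  by split; [exact: ef | move=> x; rewrite exprn_ge0 // subr_ge0].
move=> [l0 [u [[_ [x ux] hD _] hpos]]].
rewrite l0; split=> //; rewrite leNgt; apply/negP => l1.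
move: ux; apply/negP; rewrite negbK eq_le hpos andbT.
have := hD x; rewrite Delta0 opprB => e.
have hs : 0 <= m%:R^-1 * \sum_(i < m) u (rcons x i).
  by rewrite mulr_ge0 ?invr_ge0 ?ler0n // sumr_ge0.
have : 0 <= (1 - lam) * u x.
  by rewrite mulrBl mul1r -e opprB addrC subrK.
by rewrite nmulr_rge0 // subr_lt0.
Qed.
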